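(* There is no odd perfect number of the form $n = 5^{\alpha} M^{2\beta}$, where $\alpha$ and $\beta$ are positive integers and $M$ is a square-free positive integer with $5 \nmid M$.
   Context: A positive integer $n$ is perfect if $\sigma(n) = 2n$, where $\sigma(n)$ denotes the sum of all positive divisors of $n$. *)

(* Defs.v *)
From mathcomp Require Import all_boot.
Set Implicit Arguments. Unset Strict Implicit. Unset Printing Implicit Defensive.

Definition sigma (n : nat) : nat := \sum_(d <- divisors n) d.

Definition perfect (n : nat) : Prop := 0 < n /\ sigma n = 2 * n.

Definition squarefree (m : nat) : Prop := forall p, prime p -> ~~ (p ^ 2 %| m).

(* Main.v *)
Require Import Defs.
From mathcomp Require Import all_boot.
From mathcomp Require Import zify.
Set Implicit Arguments. Unset Strict Implicit. Unset Printing Implicit Defensive.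

Lemma sigma_pow p k : prime p -> sigma (p ^ k) = \sum_(i < k.+1) p ^ i.
Proof.
move=> pp; rewrite /sigma.
rewrite (perm_big [seq p ^ i | i <- iota 0 k.+1]).
  by rewrite big_map -(big_mkord xpredT (fun i => p ^ i)) /index_iota subn0.
apply: uniq_perm.
- exact: divisors_uniq.
- rewrite map_inj_uniq ?iota_uniq //; apply: expnI; exact: prime_gt1.
move=> d; rewrite -dvdn_divisors ?expn_gt0 ?prime_gt0 //.

apply/idP/idP => [/(dvdn_pfactor _ _ pp)[m hm ->]|/mapP[m hm ->]].
  by apply/mapP; exists m; rewrite // mem_iota; lia.
by apply/dvdn_pfactor => //; exists m => //; move: hm; rewrite mem_iota; lia.
Qed.

Lemma gcd_split a b d1 d2 : coprime a b -> d1 %| a -> d2 %| b -> gcdn (d1 * d2) a = d1.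
Proof.
move=> cab h1 h2.
have c2 : coprime d2 a by rewrite coprime_sym; apply: (coprime_dvdr h2).
rewrite gcdnC Gauss_gcdl; last by rewrite coprime_sym.
by rewrite gcdnC; apply/gcdn_idPl.
Qed.

Arguments gcd_split {a b d1 d2}.

Lemma gcd_prod a b d : coprime a b -> d %| a * b -> d = gcdn d a * gcdn d b.
Proof.
move=> cab hd; apply/eqP; rewrite eqn_dvd; apply/andP; split.
  rewrite muln_gcdl !muln_gcdr; by rewrite !dvdn_gcd dvdn_mulr // dvdn_mulr // dvdn_mull // hd.
rewrite Gauss_dvd ?dvdn_gcdl ?dvdn_gcdl //.
apply: (coprime_dvdl (dvdn_gcdr _ _)); apply: (coprime_dvdr (dvdn_gcdr _ _)).
exact: cab.
Qed.

Lemma sigma_mul a b : 0 < a -> 0 < b -> coprime a b ->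
  sigma (a * b) = sigma a * sigma b.
Proof.
move=> a0 b0 cab; rewrite /sigma big_distrl /=.
transitivity (\sum_(d <- [seq x * y | x <- divisors a, y <- divisors b]) d); last first.
  rewrite -(map_allpairs (uncurry muln) pair) big_map big_allpairs.
  by apply: eq_bigr => x _; rewrite big_distrr.
apply: perm_big; apply: uniq_perm.
- exact: divisors_uniq.
- apply: allpairs_uniq; try exact: divisors_uniq.
  move=> [x y] [x' y'] /allpairsPdep[x1 [y1 [hx hy [-> ->]]]]
    /allpairsPdep[x2 [y2 [hx2 hy2 [-> ->]]]] /= heq.
  rewrite -dvdn_divisors // in hx; rewrite -dvdn_divisors // in hx2.
  rewrite -dvdn_divisors // in hy; rewrite -dvdn_divisors // in hy2.
  have ex : x1 = x2 by rewrite -(gcd_split cab hx hy) heq (gcd_split cab hx2 hy2).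
  subst x2; congr pair.
  have x0 : 0 < x1 by apply: (dvdn_gt0 a0).
  by apply/eqP; rewrite -(eqn_pmul2l x0) heq.
move=> d; rewrite -dvdn_divisors ?muln_gt0 ?a0 //.
apply/idP/idP => [hd|/allpairsP[[x y] [hx hy ->]] /=].
  apply/allpairsP; exists (gcdn d a, gcdn d b) => /=.
  rewrite -!dvdn_divisors // dvdn_gcdr dvdn_gcdr; split => //.
  exact: gcd_prod.
rewrite -dvdn_divisors // in hx; rewrite -dvdn_divisors // in hy.
exact: dvdn_mul.
Qed.

Lemma geom_mod p m k : p %% m = 1 -> \sum_(i < k) p ^ i = k %[mod m].
Proof.
move=> hp; elim: k => [|k IH]; first by rewrite big_ord0.
rewrite big_ord_recr /= -modnDm IH -(modnXm k m p) hp exp1n modnDm addn1.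
by [].
Qed.

Lemma geom_dvd p k j : 1 < p -> \sum_(i < k) p ^ i %| \sum_(i < k * j) p ^ i.
Proof.
move=> p1; have p0 : 0 < p.-1 by rewrite -subn1 subn_gt0.
rewrite -(@dvdn_pmul2l p.-1) // -!predn_exp expnM.
by rewrite (predn_exp (p ^ k)) dvdn_mulr.
Qed.

Lemma sigma_ge m : 0 < m -> m <= sigma m.
Proof.
move=> m0; rewrite /sigma (big_rem m) ?divisors_id //=.
exact: leq_addr.
Qed.

Lemma sqf_pos M : squarefree M -> 0 < M.
Proof. by case: M => // H; have := H 2 isT; rewrite dvdn0. Qed.

Lemma sqf_coprime M d : squarefree M -> d %| M -> coprime d (M %/ d).
Proof.
move=> H hd; have M0 := sqf_pos H.
have d0 : 0 < d := dvdn_gt0 M0 hd.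
apply/eqP; case: (ltngtP (gcdn d (M %/ d)) 1) => [lt|gt|//].
  by move: lt; rewrite ltnS leqn0 -[_ == 0]negbK -lt0n gcdn_gt0 d0.
have pp := pdiv_prime gt; have hp := pdiv_dvd (gcdn d (M %/ d)).
have pd : pdiv (gcdn d (M %/ d)) %| d := dvdn_trans hp (dvdn_gcdl _ _).
have pm : pdiv (gcdn d (M %/ d)) %| M %/ d := dvdn_trans hp (dvdn_gcdr _ _).
have : pdiv (gcdn d (M %/ d)) ^ 2 %| M by rewrite -{2}(divnK hd) expnS expn1 dvdn_mul.
by rewrite (negbTE (H _ pp)).
Qed.

Lemma sqf_dvd M d : squarefree M -> d %| M -> squarefree d.
Proof.
move=> H hd p pp; apply/negP => hp; have := H p pp.
by rewrite (dvdn_trans hp hd).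
Qed.

Lemma sigma_dvd M d N : squarefree M -> d %| M -> sigma (d ^ N) %| sigma (M ^ N).
Proof.
move=> H hd; have M0 := sqf_pos H.
have d0 : 0 < d := dvdn_gt0 M0 hd.
have e0 : 0 < M %/ d by rewrite divn_gt0 // dvdn_leq.
have -> : M = d * (M %/ d) by rewrite mulnC divnK.
rewrite expnMn sigma_mul ?expn_gt0 ?d0 ?e0 //; first exact: dvdn_mulr.
by apply: coprimeXl; apply: coprimeXr; apply: sqf_coprime.
Qed.

Lemma pow_odd_mod5_aux b m : b \in [:: 2; 3; 4] ->
  (b ^ (2 * m + 1)) %% 5 \in [:: b; b ^ 3 %% 5].
Proof.
move=> hb; elim: m => [|m IH]; first by rewrite muln0 add0n expn1 modn_small ?inE ?eqxx //;
  move: hb; rewrite !inE => /or3P[]/eqP->.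
have -> : b ^ (2 * m.+1 + 1) = b ^ (2 * m + 1) * b ^ 2.
  by rewrite -expnD; congr (_ ^ _); lia.
rewrite -modnMml.
move: (b ^ (2 * m + 1) %% 5) IH => a ha.
rewrite !inE in hb ha.
by case/or3P: hb => /eqP E; subst b; case/orP: ha => /eqP ->.
Qed.

Lemma pow_odd_mod5 c m : c %% 5 \in [:: 2; 3; 4] -> (c ^ (2 * m + 1)) %% 5 != 1.
Proof.
move=> hc; rewrite -modnXm.
have := pow_odd_mod5_aux m hc.
move: (c %% 5) hc => b hb.
rewrite !inE in hb.
by case/or3P: hb => /eqP E; subst b; rewrite !inE => /orP[]/eqP ->.
Qed.

Lemma key5 q k : prime q -> ~~ (5 %| q) -> odd k -> ~~ (5 %| k) ->
  ~~ (5 %| \sum_(i < k) q ^ i).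
Proof.
move=> pq n5q ok n5k.
case E: (q %% 5 == 1).
  by move/eqP: E => E; rewrite /dvdn (geom_mod k E).
apply/negP => h5.
have h : 5 %| (q ^ k).-1 by rewrite predn_exp dvdn_mull.
have qk0 : 0 < q ^ k by rewrite expn_gt0 prime_gt0.
have hm : q ^ k %% 5 = 1.
  move: h qk0; rewrite -subn1; move: (q ^ k) => x; lia.
have hk : k = 2 * k./2 + 1 by move: (odd_double_half k); rewrite ok -muln2; lia.
have hin : q %% 5 \in [:: 2; 3; 4].
  have q5 : q %% 5 < 5 := ltn_pmod q (isT : 0 < 5).
  move: n5q E q5; rewrite /dvdn !inE; move: (q %% 5) => x; lia.
by have := pow_odd_mod5 k./2 hin; rewrite -hk hm.
Qed.

Lemma sigma1 : sigma 1 = 1.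
Proof. by rewrite /sigma (_ : divisors 1 = [:: 1]) ?big_seq1. Qed.

Lemma sqf_props N M : ~~ odd N -> squarefree M ->
  (odd M -> odd (sigma (M ^ N))) /\
  (~~ (5 %| M) -> ~~ (5 %| N.+1) -> ~~ (5 %| sigma (M ^ N))).
Proof.
move=> eN; elim/ltn_ind: M => M IH H.
have M0 := sqf_pos H.
case: (ltngtP M 1) => [lt|gt|->]; first lia; last by rewrite exp1n sigma1.
have pp := pdiv_prime gt; have hp := pdiv_dvd M.
set p := pdiv M in pp hp *.
have eM : M = p * (M %/ p) by rewrite mulnC divnK.
have lt : M %/ p < M by rewrite ltn_Pdiv ?prime_gt1.
have H' : squarefree (M %/ p) by apply: (sqf_dvd H); rewrite {2}eM dvdn_mull.
have [IH1 IH2] := IH _ lt H'.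
have M'0 : 0 < M %/ p := sqf_pos H'.
have cop := coprimeXl N (coprimeXr N (sqf_coprime H hp)).
have hs : sigma (M ^ N) = sigma (p ^ N) * sigma ((M %/ p) ^ N).
  by rewrite {1}eM expnMn sigma_mul // expn_gt0 ?M'0 ?(prime_gt0 pp).
split.
  move=> oM; have /andP[op oM'] : odd p && odd (M %/ p) by rewrite -oddM -eM.
  rewrite hs oddM IH1 // andbT sigma_pow //.
  have hp2 : p %% 2 = 1 by rewrite modn2 op.
  have := geom_mod N.+1 hp2; rewrite !modn2 /= eN.
  by case: (odd _).
move=> n5M n5N; rewrite hs Euclid_dvdM // negb_or; apply/andP; split.
  rewrite sigma_pow //; apply: key5 => //=.
  by apply/negP => h; move/negP: n5M; apply; apply: dvdn_trans h hp.
apply: IH2 => //; apply/negP => h; move/negP: n5M; apply.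
by apply: dvdn_trans h _; rewrite {2}eM dvdn_mull.
Qed.

Lemma dvd_M r a M N : prime r -> r != 2 -> r != 5 -> r %| 2 * (5 ^ a * M ^ N) -> r %| M.
Proof.
move=> pr r2 r5; rewrite !Euclid_dvdM // !Euclid_dvdX // (dvdn_prime2 pr (isT : prime 2)) (dvdn_prime2 pr (isT : prime 5)).
by rewrite (negbTE r2) (negbTE r5) /= => /andP[].
Qed.

Lemma five_sum q N : 5 %| N.+1 -> 1 < q -> \sum_(i < 5) q ^ i %| \sum_(i < N.+1) q ^ i.
Proof.
move=> h q1; have -> : N.+1 = 5 * (N.+1 %/ 5) by rewrite mulnC divnK.
exact: geom_dvd.
Qed.

Lemma arith1 X Y : 6 * X = 2 * (5 * Y) -> 5 * 5 %| X -> 5 %| Y.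
Proof. lia. Qed.

Lemma arith_final x y z w A B C W :
  A * (B * C * W) = 2 * (x * (y * z * w)) ->
  4 * A = 5 * x - 1 -> 2 * B = 3 * y - 1 -> 10 * C = 11 * z - 1 ->
  5 ^ 2 <= x -> 3 ^ 4 <= y -> 11 ^ 1 <= z -> w <= W -> 0 < w -> False.
Proof.
move=> hper gA gB gC hx hy hz hR hR0.
have h1 : 31 * x <= 25 * A by clear -gA hx; lia.
have h2 : 121 * y <= 81 * B by clear -gB hy; lia.
have h3 : 108 * z <= 100 * C by clear -gC hz; lia.
have h12 := leq_mul h1 h2; have h := leq_mul h12 h3.
have hxyz : 0 < x * y * z by rewrite !muln_gt0; apply/andP; split; [apply/andP; split|]; lia.
have hABC : 2 * (x * y * z) < A * B * C.
  have e1 : 31 * x * (121 * y) * (108 * z) = (31 * 121 * 108) * (x * y * z) by lia.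
  have e2 : 25 * A * (81 * B) * (100 * C) = (25 * 81 * 100) * (A * B * C) by lia.
  rewrite e1 e2 in h.
  clear -h hxyz; move: (x * y * z) (A * B * C) h hxyz => u v h hu.
  lia.
have : 2 * (x * y * z) * w < A * B * C * W.
  apply: (@leq_trans (A * B * C * w)); first by rewrite ltn_pmul2r.
  by rewrite leq_mul2l hR orbT.
have -> : A * B * C * W = A * (B * C * W) by rewrite !mulnA.
by rewrite hper !mulnA ltnn.
Qed.

Lemma sigma51 : sigma (5 ^ 1) = 6.
Proof. by rewrite sigma_pow // !big_ord_recr big_ord0. Qed.

Lemma c11_3221 : coprime 11 3221.
Proof. by vm_compute. Qed.

Lemma m3221 : 3221 %% 5 = 1.
Proof. by vm_compute. Qed.

Lemma pr3221 : prime 3221.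
Proof. by vm_compute. Qed.

Theorem theorem1p2 (n alpha beta M : nat) :
  0 < alpha -> 0 < beta -> 0 < M -> squarefree M -> ~~ (5 %| M) ->
  n = 5 ^ alpha * M ^ (2 * beta) ->
  ~ (odd n /\ perfect n).
Proof.
move=> a0 b0 M0 H n5M -> [on [_ hper]].
set N := 2 * beta in on hper *.
have eN : ~~ odd N by rewrite /N oddM.
have p5 : prime 5 by [].
have cop : coprime (5 ^ alpha) (M ^ N).
  by apply: coprimeXl; apply: coprimeXr; rewrite prime_coprime.
rewrite sigma_mul ?expn_gt0 ?M0 // in hper.
have [hodd h5] := sqf_props eN H.
have d5a : 5 %| 5 ^ alpha by rewrite -(prednK a0) expnS dvdn_mulr.
have s5 : sigma (5 ^ alpha) %% 5 = 1.
  rewrite sigma_pow // big_ord_recl expn0.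
  have : 5 %| \sum_(i < alpha) 5 ^ bump 0 i.
    by apply: dvdn_sum => i _; rewrite expnS dvdn_mulr.
  move: (\sum_(i < alpha) 5 ^ bump 0 i) => X; lia.
have N5 : 5 %| N.+1.
  apply/negPn/negP => n5N.
  have hn := h5 n5M n5N.
  have : 5 %| sigma (5 ^ alpha) * sigma (M ^ N) by rewrite hper dvdn_mull // dvdn_mulr.
  rewrite Euclid_dvdM // => /orP[h|h]; last by rewrite h in hn.
  by move: h; rewrite /dvdn s5.
have N4 : 4 <= N by move: N5 b0; rewrite /N; lia.
have oM : odd M.
  move: on; rewrite oddM => /andP[_]; rewrite oddX => /orP[/eqP|//].
  by rewrite /N; lia.
have oS := hodd oM.
have ev5 : ~~ odd (sigma (5 ^ alpha)).
  by apply/negP => o5; move: (congr1 odd hper); rewrite oddM o5 oS oddM.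
have oa : odd alpha.
  have h52 : 5 %% 2 = 1 by [].
  move: ev5; have := geom_mod alpha.+1 h52; rewrite !modn2 -sigma_pow //=.
  by case: (odd (sigma _)) => //; case: (odd alpha).
have d3 : 3 %| M.
  apply: (dvd_M (a := alpha) (N := N)) => //; rewrite -hper.
  apply: dvdn_mulr; rewrite sigma_pow //.
  have -> : alpha.+1 = 2 * (alpha.+1)./2.
    by move: (odd_double_half alpha.+1); rewrite /= oa -muln2; lia.
  by apply: dvdn_trans (geom_dvd _ _ _) => //; rewrite !big_ord_recr big_ord0.
have d11 : 11 %| M.
  apply: (dvd_M (a := alpha) (N := N)) => //; rewrite -hper.
  apply: dvdn_mull; apply: dvdn_trans (sigma_dvd N H d3); rewrite sigma_pow //.
  apply: dvdn_trans (five_sum _ _) => //.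
  by rewrite !big_ord_recr big_ord0 /=.
have e11 : \sum_(i < 5) 11 ^ i = 5 * 3221.
  by rewrite !big_ord_recr big_ord0 /=; lia.
have s11 : 5 * 3221 %| sigma (11 ^ N).
  by rewrite sigma_pow // -e11; apply: five_sum.

have d3221 : 3221 %| M.
  apply: (dvd_M (a := alpha) (N := N) pr3221 isT isT); rewrite -hper.
  apply: dvdn_mull; apply: dvdn_trans (sigma_dvd N H d11).
  apply: dvdn_trans s11; exact: dvdn_mull (dvdnn 3221).
have [a1|a2] : alpha = 1 \/ 2 <= alpha by clear -a0; lia.
  subst alpha.
  have s51 := sigma51.
  have d : 11 * 3221 %| M by rewrite (Gauss_dvd M c11_3221) d11 d3221.
  have hsd := sigma_dvd N H d.
  have c2 : coprime (11 ^ N) (3221 ^ N) by apply: coprimeXl; apply: coprimeXr; exact: c11_3221.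
  have q1 : 0 < 11 ^ N by rewrite expn_gt0.
  have q2 : 0 < 3221 ^ N by rewrite expn_gt0 (prime_gt0 pr3221).
  rewrite expnMn (sigma_mul q1 q2 c2) in hsd.
  have h5a : 5 %| sigma (11 ^ N) := dvdn_trans (dvdn_mulr 3221 (dvdnn 5)) s11.
  have h5b : 5 %| sigma (3221 ^ N).
    by rewrite /dvdn (sigma_pow _ pr3221) (geom_mod _ m3221).
  have h25 : 5 * 5 %| sigma (M ^ N) := dvdn_trans (dvdn_mul h5a h5b) hsd.
  rewrite s51 expn1 in hper.
  have : 5 %| M ^ N by apply: arith1 hper h25.
  by rewrite (Euclid_dvdX M N p5) (negbTE n5M).
have c311 : coprime 3 11 by [].
have d : 3 * 11 %| M by rewrite (Gauss_dvd M c311) d3 d11.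
set R := M %/ (3 * 11).
have cR : coprime (3 * 11) R := sqf_coprime H d.
have R0 : 0 < R by rewrite divn_gt0 // dvdn_leq.
have eM : M = 3 * 11 * R by rewrite mulnC divnK.
have hs : sigma (M ^ N) = sigma (3 ^ N) * sigma (11 ^ N) * sigma (R ^ N).
  have c1 : coprime ((3 * 11) ^ N) (R ^ N) by apply: coprimeXl; apply: coprimeXr.
  have c2 : coprime (3 ^ N) (11 ^ N) by apply: coprimeXl; apply: coprimeXr.
  have q1 : 0 < (3 * 11) ^ N by rewrite expn_gt0.
  have q2 : 0 < R ^ N by rewrite expn_gt0 R0.
  have q3 : 0 < 3 ^ N by rewrite expn_gt0.
  have q4 : 0 < 11 ^ N by rewrite expn_gt0.
  rewrite {1}eM (expnMn (3 * 11)) (sigma_mul q1 q2 c1).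
  by rewrite expnMn (sigma_mul q3 q4 c2).
have eMN : M ^ N = 3 ^ N * 11 ^ N * R ^ N by rewrite {1}eM !expnMn.
rewrite hs eMN in hper.
have gA : 4 * sigma (5 ^ alpha) = 5 * 5 ^ alpha - 1.
  by have := predn_exp 5 alpha.+1; rewrite -sigma_pow // expnS -subn1 /= => ->.
have gB : 2 * sigma (3 ^ N) = 3 * 3 ^ N - 1.
  by have := predn_exp 3 N.+1; rewrite -sigma_pow // expnS -subn1 /= => ->.
have gC : 10 * sigma (11 ^ N) = 11 * 11 ^ N - 1.
  by have := predn_exp 11 N.+1; rewrite -sigma_pow // expnS -subn1 /= => ->.
have hx : 5 ^ 2 <= 5 ^ alpha by rewrite leq_exp2l.
have hy : 3 ^ 4 <= 3 ^ N by rewrite leq_exp2l.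
have hz : 11 ^ 1 <= 11 ^ N by rewrite leq_exp2l // (leq_trans _ N4).
have hR0 : 0 < R ^ N by rewrite expn_gt0 R0.
have hR := sigma_ge hR0.
exact: (arith_final hper gA gB gC hx hy hz hR hR0).
Qed.
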